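(* For all real numbers $a,b,c>0$, \[ \frac{abc(a+b+c)^3}{3(ab+bc+ca)(a^3c+ab^3+bc^3)}\leq 1. \] *)

(* Defs.v *)
From Stdlib Require Import Reals.

(* Main.v *)
Require Import Defs.
From Stdlib Require Import Reals Lra Psatz.
Open Scope R_scope.
Lemma key (a b c : R) (ha : 0 < a) (hb : 0 < b) (hc : 0 < c) :
  a * b * c * (a + b + c) ^ 3 <= 3 * (a * b + b * c + c * a) * (a ^ 3 * c + a * b ^ 3 + b * c ^ 3).
Proof.
  assert (hab := Rmult_lt_0_compat _ _ ha hb).
  assert (hbc := Rmult_lt_0_compat _ _ hb hc).
  assert (hca := Rmult_lt_0_compat _ _ hc ha).
  pose proof (Rmult_le_pos _ _ (Rlt_le _ _ hab) (pow2_ge_0 (a-b))).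
  pose proof (Rmult_le_pos _ _ (Rlt_le _ _ hbc) (pow2_ge_0 (b-c))).
  pose proof (Rmult_le_pos _ _ (Rlt_le _ _ hca) (pow2_ge_0 (c-a))).
  pose proof (Rmult_le_pos _ _ (Rlt_le _ _ hab) (pow2_ge_0 (b-c))).
  pose proof (Rmult_le_pos _ _ (Rlt_le _ _ hbc) (pow2_ge_0 (c-a))).
  pose proof (Rmult_le_pos _ _ (Rlt_le _ _ hca) (pow2_ge_0 (a-b))).
  pose proof (Rmult_le_pos _ _ (Rlt_le _ _ hab) (pow2_ge_0 (c-a))).
  pose proof (Rmult_le_pos _ _ (Rlt_le _ _ hbc) (pow2_ge_0 (a-b))).
  pose proof (Rmult_le_pos _ _ (Rlt_le _ _ hca) (pow2_ge_0 (b-c))).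
  nra.
Qed.

Theorem mainTheorem3 (a b c : R) (ha : 0 < a) (hb : 0 < b) (hc : 0 < c) :
  a * b * c * (a + b + c) ^ 3 /
    (3 * (a * b + b * c + c * a) * (a ^ 3 * c + a * b ^ 3 + b * c ^ 3)) <= 1.
Proof.
  assert (hD : 0 < 3 * (a * b + b * c + c * a) * (a ^ 3 * c + a * b ^ 3 + b * c ^ 3)).
  { apply Rmult_lt_0_compat; [apply Rmult_lt_0_compat; [lra|] |].
    - pose proof (Rmult_lt_0_compat _ _ ha hb); pose proof (Rmult_lt_0_compat _ _ hb hc);
      pose proof (Rmult_lt_0_compat _ _ hc ha); lra.
    - assert (0 < a^3*c) by (apply Rmult_lt_0_compat; [apply pow_lt|]; lra).
      assert (0 < a*b^3) by (apply Rmult_lt_0_compat; [|apply pow_lt]; lra).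
      assert (0 < b*c^3) by (apply Rmult_lt_0_compat; [|apply pow_lt]; lra). lra. }
  apply (Rmult_le_reg_r _ _ _ hD). unfold Rdiv. rewrite Rmult_assoc, Rinv_l by lra.
  rewrite Rmult_1_r, Rmult_1_l. apply key; assumption.
Qed.
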